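(* Let $(\Omega,\mathcal{F},(\mathcal{F}_t)_{t\in[0,T]},P)$ be a filtered probability space, $T>0$, and let $(X_t)_{t\in[0,T]}$ be a continuous martingale whose initial value $X_0$ is a deterministic constant. Let $M_T=\max_{0\le s\le T}X_s$. Then $$E\left(M_T\right)\le\sqrt{2}\,E\left(X_T^2\right)^{1/2}.$$ *)

(* Defs.v *)
From HB Require Import structures.
From mathcomp Require Import all_boot all_order all_algebra.
From mathcomp Require Import all_classical all_reals all_analysis.
Set Implicit Arguments. Unset Strict Implicit. Unset Printing Implicit Defensive.
Import Order.TTheory GRing.Theory Num.Theory numFieldNormedType.Exports.
Local Open Scope classical_set_scope.
Local Open Scope ring_scope.

Definition is_filtration d (Omega : measurableType d) (R : realType) (T : R)
    (F : R -> set (set Omega)) : Prop :=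
  (forall t, 0 <= t <= T -> sigma_algebra setT (F t)) /\
  (forall t, 0 <= t <= T -> F t `<=` measurable) /\
  (forall s t, 0 <= s -> s <= t -> t <= T -> F s `<=` F t).

(* (X_t) is a martingale w.r.t. F under P on [0,T]:
   adapted, integrable, and E[X_t 1_A] = E[X_s 1_A] for s <= t, A in F_s
   (the defining property of E[X_t | F_s] = X_s). *)
Definition is_martingale d (Omega : measurableType d) (R : realType) (T : R)
    (P : probability Omega R) (F : R -> set (set Omega)) (X : R -> Omega -> R) : Prop :=
  (forall t, 0 <= t <= T -> forall B : set R, measurable B -> F t (X t @^-1` B)) /\
  (forall t, 0 <= t <= T -> P.-integrable setT (fun w => (X t w)%:E)) /\
  (forall s t, 0 <= s -> s <= t -> t <= T -> forall A, F s A ->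
     (\int[P]_(w in A) (X t w)%:E = \int[P]_(w in A) (X s w)%:E)%E).

Definition continuous_paths (Omega : Type) (R : realType) (T : R)
    (X : R -> Omega -> R) : Prop :=
  forall w, {within `[0, T]%classic, continuous (fun t : R => X t w)}.

(* running maximum M_T = max_{0<=s<=T} X_s (as a supremum in \bar R;
   it is attained and finite for continuous paths) *)
Definition running_max (Omega : Type) (R : realType) (T : R)
    (X : R -> Omega -> R) (w : Omega) : \bar R :=
  ereal_sup [set (X s w)%:E | s in `[0, T]%classic].

(* Main.v *)
Require Import Defs.
From HB Require Import structures.
From mathcomp Require Import all_boot all_order all_algebra.
From mathcomp Require Import all_classical all_reals all_analysis.
From mathcomp Require Import measurable_realfun.
From mathcomp Require Import lra ring.
Import Order.TTheory GRing.Theory Num.Theory numFieldNormedType.Exports.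
Local Open Scope classical_set_scope.
Local Open Scope ring_scope.
Set Implicit Arguments. Unset Strict Implicit. Unset Printing Implicit Defensive.

Fixpoint mx (R : realType) (f : nat -> R) N : R :=
  if N is N'.+1 then Num.max (mx f N') (f N) else f 0.

Lemma mx_ge (R : realType) (f : nat -> R) N k : (k <= N)%N -> f k <= mx f N.
Proof.
elim: N => [|N IH]; first by rewrite leqn0 => /eqP ->.
rewrite leq_eqVlt => /orP[/eqP ->|kN] /=; rewrite le_max ?lexx ?orbT //.
by rewrite IH.
Qed.

Lemma mx_ex (R : realType) (f : nat -> R) N : exists2 k, (k <= N)%N & mx f N = f k.
Proof.
elim: N => [|N [k kN IH]] /=; first by exists 0%N.
case: (leP (mx f N) (f N.+1)) => H.
  by exists N.+1 => //; rewrite max_r.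
by exists k; [rewrite (leq_trans kN) | idtac].
Qed.

Lemma mx_meas d (Omega : measurableType d) (R : realType) (f : nat -> Omega -> R) N :
  (forall k, (k <= N)%N -> measurable_fun setT (f k)) ->
  measurable_fun setT (fun w => mx (f^~ w) N).
Proof.
elim: N => [|N IH] mf /=; first exact: mf.
apply: (measurable_maxr (f := fun w => mx (f^~ w) N) (g := f N.+1)).
  by apply: IH => k kN; apply: mf; rewrite (leq_trans kN).
exact: mf.
Qed.

Lemma sum_lower (R : realType) (e : nat -> R) y h J : 0 < h ->
  (forall j, 0 <= e j) -> (forall j, j.+1%:R * h <= y -> 1 <= e j) ->
  Num.min (y - h) (J%:R * h) <= \sum_(j < J) e j * h.
Proof.
move=> h0 e0 e1; elim: J => [|J IH].
  by rewrite big_ord0 mul0r ge_min lexx orbT.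
rewrite big_ord_recr /=; set S := \sum_(j < J) _ in IH *.
have eh : 0 <= e J * h by rewrite mulr_ge0 ?e0 ?ltW.
move: IH; rewrite !ge_min => /orP[yS|JS].
  by rewrite (le_trans yS) ?lerDl.
have [Jy|yJ] := leP (J.+1%:R * h) y.
  have eJh : h <= e J * h.
    by rewrite -[X in X <= _]mul1r; apply: ler_wpM2r; [exact: ltW | exact: e1].
  apply/orP; right; rewrite -natr1 mulrDl mul1r; lra.
apply/orP; left; rewrite -natr1 mulrDl mul1r in yJ.
lra.
Qed.

Section L2.
Context d (Omega : measurableType d) (R : realType) (P : probability Omega R).

Lemma Lfun2_of (f : Omega -> R) : measurable_fun setT f ->
  P.-integrable setT (fun x => (f x ^+ 2)%:E) -> f \in Lfun P 2%:E.
Proof.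
move=> mf /integrableP [_ fi].
rewrite inE; apply/andP; split; first by rewrite inE.
rewrite inE /= /finite_norm unlock /Lnorm poweR_lty //.
apply: le_lt_trans fi; rewrite le_eqVlt; apply/orP; left; apply/eqP.
apply: eq_integral => x _ /=.
have -> : `|f x| `^ 2 = `|f x| ^+ 2 by rewrite -powR_mulrn.
by rewrite real_normK ?num_real // ger0_norm ?sqr_ge0.
Qed.

Lemma Lfun2_bounded (f : Omega -> R) M : measurable_fun setT f ->
  (forall x, `|f x| <= M) -> f \in Lfun P 2%:E.
Proof.
move=> mf fM; apply: Lfun2_of => //.
apply: (@le_integrable _ _ _ _ _ _ _ (EFin \o cst (M ^+ 2))) => //.
- by apply/measurable_EFinP; exact: measurable_funX.
- move=> x _ /=; rewrite lee_fin ger0_norm ?sqr_ge0 //.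
  have M0 : 0 <= M by apply: le_trans (fM x).
  rewrite ger0_norm ?sqr_ge0 // -real_normK ?num_real //.
  by rewrite lerXn2r // ?nnegrE.
- exact: finite_measure_integrable_cst.
Qed.

Lemma Lfun_indic (A : set Omega) : measurable A -> \1_A \in Lfun P 2%:E.
Proof.
move=> mA; apply: (@Lfun2_bounded _ 1); first exact: measurable_indic.
by move=> x; rewrite indicE; case: (x \in A); rewrite ?normr1 ?normr0.
Qed.

Definition EE (f : Omega -> R) : R := fine ('E_P[f])%E.

Lemma EEE f : f \in Lfun P 1 -> ('E_P[f])%E = (EE f)%:E.
Proof. by move=> f1; rewrite /EE fineK // expectation_fin_num. Qed.

Lemma EED f g : f \in Lfun P 1 -> g \in Lfun P 1 -> EE (f \+ g) = EE f + EE g.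
Proof. by move=> f1 g1; rewrite /EE expectationD // !EEE. Qed.

Lemma EEB f g : f \in Lfun P 1 -> g \in Lfun P 1 -> EE (f \- g) = EE f - EE g.
Proof. by move=> f1 g1; rewrite /EE expectationB // !EEE. Qed.

Lemma EEZ k f : f \in Lfun P 1 -> EE (k \o* f) = k * EE f.
Proof. by move=> f1; rewrite /EE expectationZl // !EEE. Qed.

Lemma EEcst r : EE (cst r) = r.
Proof. by rewrite /EE expectation_cst. Qed.

Lemma EEle f g : f \in Lfun P 1 -> g \in Lfun P 1 -> (forall x, f x <= g x) ->
  EE f <= EE g.
Proof.
move=> f1 g1 fg; rewrite -lee_fin -!EEE // unlock.
apply: le_integral => //; try exact/Lfun1_integrable.
by move=> x _; rewrite lee_fin.
Qed.

Lemma EE_ge0 f : (forall x, 0 <= f x) -> 0 <= EE f.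
Proof. by move=> f0; rewrite /EE fine_ge0 // expectation_ge0. Qed.

Lemma L2_L1 f : f \in Lfun P 2%:E -> f \in Lfun P 1.
Proof. by move=> f2; apply: Lfun_subset12 => //; exact: fin_num_measure. Qed.

Lemma L2_sq f : f \in Lfun P 2%:E -> f ^+ 2 \in Lfun P 1.
Proof. by move=> f2; rewrite expr2; exact: Lfun2_mul_Lfun1. Qed.

Lemma EE_sq f : f \in Lfun P 2%:E -> EE f ^+ 2 <= EE (f ^+ 2).
Proof.
move=> f2; have := variance_ge0 P f; rewrite varianceE // EEE ?L2_sq //.
by rewrite EEE ?L2_L1 // -EFin_expe -EFinB lee_fin subr_ge0.
Qed.

Lemma EE_indic_mul (A : set Omega) f : measurable A ->
  ('E_P[\1_A \* f] = \int[P]_(x in A) (f x)%:E)%E.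
Proof.
move=> mA; rewrite unlock [RHS]integral_mkcond; apply: eq_integral => x _ /=.
by rewrite patchE indicE; case: (x \in A); rewrite ?mul1r ?mul0r.
Qed.

End L2.

Lemma sum_le_J (R : realType) (h : R) (e : nat -> R) J : 0 <= h ->
  (forall j, 0 <= e j <= 1) -> \sum_(j < J) e j * h <= J%:R * h.
Proof.
move=> h0 e01; apply: (@le_trans _ _ (\sum_(j < J) h)).
  by apply: ler_sum => j _; have /andP[_ e1] := e01 j; rewrite ler_piMl.
by rewrite sumr_const card_ord mulr_natl.
Qed.

Lemma sq_sum_le (R : realType) (h : R) (e : nat -> R) J : 0 <= h ->
  (forall j, 0 <= e j <= 1) ->
  (\sum_(j < J) e j * h) ^+ 2 <= \sum_(j < J) (2 * j%:R + 1) * h ^+ 2 * e j.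
Proof.
move=> h0 e01; elim: J => [|J IH]; first by rewrite !big_ord0 expr0n.
rewrite !big_ord_recr /=.
have := sum_le_J J h0 e01.
have S0 : 0 <= \sum_(j < J) e j * h.
  by apply: sumr_ge0 => j _; have /andP[e0 _] := e01 j; rewrite mulr_ge0.
move: IH S0; set S := \sum_(j < J) e j * h; set Q := \sum_(j < J) _.
have /andP[e0 e1] := e01 J.
move=> IH S0 SJ.
have t1 : 0 <= (J%:R * h - S) * (h * e J) by rewrite mulr_ge0 ?subr_ge0 ?mulr_ge0.
have t2 : 0 <= h ^+ 2 * e J * (1 - e J) by rewrite !mulr_ge0 ?sqr_ge0 ?subr_ge0.
nra.
Qed.

Section Proof6.
Context d (Omega : measurableType d) (R : realType) (P : probability Omega R)
  (T : R) (F : R -> set (set Omega)) (X : R -> Omega -> R) (c : R).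
Hypotheses (T0 : 0 < T) (HF : is_filtration T F) (HM : is_martingale T P F X)
  (HX0 : forall w, X 0 w = c).

Lemma Xint t : 0 <= t <= T -> P.-integrable setT (fun w => (X t w)%:E).
Proof. by move=> ht; case: HM => _ [+ _]; apply. Qed.

Lemma Xmeas t : 0 <= t <= T -> measurable_fun setT (X t).
Proof. by move=> /Xint /integrableP [/measurable_EFinP]. Qed.

Lemma XL1 t : 0 <= t <= T -> X t \in Lfun P 1.
Proof. by move=> /Xint ht; apply/Lfun1_integrable. Qed.

Lemma Fmeas t A : 0 <= t <= T -> F t A -> measurable A.
Proof. by move=> ht; case: HF => _ [+ _]; apply. Qed.

Lemma Fsig t : 0 <= t <= T -> sigma_algebra setT (F t).
Proof. by move=> ht; case: HF => + _; apply. Qed.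

Lemma Fmono s t : 0 <= s -> s <= t -> t <= T -> F s `<=` F t.
Proof. by case: HF => _ [_]; apply. Qed.

Lemma ge_sN (s : nat -> R) (sND : forall k, s k <= s k.+1) k N :
  (k <= N)%N -> s k <= s N.
Proof. by move=> kN; apply: (proj1 (nondecreasing_seqP s) sND). Qed.

Definition Cset (s : nat -> R) N l := [set w | exists2 k, (k <= N)%N & l <= X (s k) w].

Lemma Cset_F (s : nat -> R) (sND : forall k, s k <= s k.+1) (s0 : 0 <= s 0)
  N l : s N <= T -> F (s N) (Cset s N l).
Proof.
move=> sN.
have sk k : (k <= N)%N -> 0 <= s k <= T.
  move=> kN; rewrite (le_trans s0) ?(le_trans _ sN) ?ge_sN//.
have sNT : 0 <= s N <= T by rewrite sk.
have [F0 _ FU] := Fsig sNT.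
have -> : Cset s N l = \bigcup_k (if (k <= N)%N then X (s k) @^-1` `[l, +oo[ else set0).
  apply/seteqP; split => w /=.
    by case=> k kN lX; exists k => //; rewrite kN /= in_itv /= lX.
  case=> k _; case: ifPn => // kN /=; rewrite in_itv /= andbT => lX.
  by exists k.
apply: FU => k; case: ifPn => // kN.
have /andP[sk0 skT] := sk k kN.
apply: (Fmono sk0 (ge_sN sND kN) sN).
by case: HM => + _; apply => //; rewrite sk0 skT.
Qed.

Lemma lowbnd t A l : 0 <= t <= T -> measurable A -> (forall w, A w -> l <= X t w) ->
  (l%:E * P A <= \int[P]_(w in A) (X t w)%:E)%E.
Proof.
move=> ht mA lA.
rewrite -integral_cst//.
apply: le_integral => //.
- exact: finite_measure_integrable_cst.
- exact: integrableS (Xint ht).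
- by move=> w /set_mem Aw; rewrite lee_fin lA.
Qed.

Lemma doob (s : nat -> R) (sND : forall k, s k <= s k.+1) (s0 : 0 <= s 0) N l :
  s N <= T -> (l%:E * P (Cset s N l) <= \int[P]_(w in Cset s N l) (X (s N) w)%:E)%E.
Proof.
have sk k : s k <= T -> 0 <= s k <= T.
  by move=> skT; rewrite skT andbT (le_trans s0)// ge_sN.
elim: N => [|N IH] sN.
  apply: lowbnd => //; first by rewrite sk.
    exact: Fmeas (sk _ sN) (Cset_F sND s0 _ sN).
  by move=> w [k]; rewrite leqn0 => /eqP ->.
have sN' : s N <= T by rewrite (le_trans (sND N)).
set C := Cset s N l.
set B := [set w | l <= X (s N.+1) w] `\` C.
have mC : measurable C := Fmeas (sk _ sN') (Cset_F sND s0 _ sN').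
have mB : measurable B.
  apply: measurableD => //.
  rewrite -[X in measurable X]setTI.
  have := Xmeas (sk _ sN) measurableT (measurable_itv `[l, +oo[).
  congr measurable; apply/seteqP; split => w /=; by rewrite in_itv /= andbT.
have CB : Cset s N.+1 l = C `|` B.
  apply/seteqP; split => w /=.
    case=> k; rewrite leq_eqVlt => /orP[/eqP -> lX|kN lX].
      by have [Cw|nCw] := pselect (C w); [left|right].
    by left; exists k.
  case=> [[k kN lX]|[lX _]]; first by exists k => //; rewrite ltnW.
  by exists N.+1.
have dCB : [disjoint C & B].
  by apply/disj_setPS => w [Cw [_]].
rewrite CB integral_setU //; last first.
  apply: measurable_funS (measurableT) _ _ => //.
  exact/measurable_EFinP/Xmeas/sk.
have -> : P (C `|` B) = (P C + P B)%E.
  by rewrite measureU //; apply/seteqP; split => w // [Cw [_]].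
rewrite muleDr //.
apply: leeD.
  rewrite (_ : (\int[P]_(w in C) _ = \int[P]_(w in C) (X (s N) w)%:E)%E); first exact: IH.
  case: HM => _ [_]; apply => //; first by case/andP: (sk _ sN').
  exact: Cset_F.
apply: lowbnd => //; first by rewrite sk.
by move=> w [].
rewrite ge0_adde_def // inE; exact: measure_ge0.
Qed.

Lemma EXT : EE P (X T) = c.
Proof.
have hT : 0 <= T <= T by rewrite lexx ltW.
have h0 : (0:R) <= 0 <= T by rewrite lexx ltW.
have [F0 FC _] := Fsig h0.
have FT : F 0 setT by rewrite -(setD0 setT); apply: FC.
rewrite /EE (_ : ('E_P[X T])%E = ('E_P[cst c])%E) ?expectation_cst //.
rewrite unlock.
case: HM => _ [_ /(_ 0 T (lexx 0) (ltW T0) (lexx T) setT FT) ->].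
by rewrite -(expectation_cst P c) unlock; apply: eq_integral => w _ /=; rewrite HX0.
Qed.

Section core.
Variables (s : nat -> R) (sND : forall k, s k <= s k.+1) (s0 : 0 <= s 0)
  (N : nat) (sNT : s N = T) (J : nat) (h : R) (h0 : 0 < h)
  (XT2 : X T \in Lfun P 2%:E).

Let lev (j : nat) := c + j.+1%:R * h.
Let Cj j := Cset s N (lev j).
Let a := \sum_(j < J) (h \o* \1_(Cj j)).
Let Y := X T \- cst c.
Let Z := a \- Y.
Let g j := h \o* (\1_(Cj j) \* (X T \- cst (lev j))).
Let G K := \sum_(j < K) g j.

Let p12 : (1 <= (2:R)%:E)%E. Proof. by rewrite lee_fin ler1n. Qed.
Let p11 : (1 <= (1:R)%:E)%E. Proof. by rewrite lexx. Qed.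
Let hT : 0 <= T <= T. Proof. by rewrite lexx ltW. Qed.
Let sNT' : s N <= T. Proof. by rewrite sNT. Qed.

Let mC j : measurable (Cj j).
Proof. by apply: (Fmeas (t := s N)); [rewrite sNT | exact: Cset_F]. Qed.

Let La : a \in Lfun P 2%:E.
Proof.
apply: rpred_sum => j _; apply: Lfun_scale; first by rewrite ?lee1n ?ler1n.
exact: Lfun_indic.
Qed.

Let LY : Y \in Lfun P 2%:E.
Proof. by apply: rpredB => //; exact: Lfun_cst. Qed.

Let LZ : Z \in Lfun P 2%:E.
Proof. exact: rpredB. Qed.

Let Lg j : g j \in Lfun P 1.
Proof.
apply: Lfun_scale => //; apply: Lfun2_mul_Lfun1; first exact: Lfun_indic.
by apply: rpredB => //; exact: Lfun_cst.
Qed.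

Let LG K : G K \in Lfun P 1.
Proof. by apply: rpred_sum => j _; exact: Lg. Qed.

Let Eg j : 0 <= EE P (g j).
Proof.
rewrite EEZ; last first.
  apply: Lfun2_mul_Lfun1; first exact: Lfun_indic.
  by apply: rpredB => //; exact: Lfun_cst.
apply: mulr_ge0; first exact: ltW.
rewrite /EE EE_indic_mul //.
rewrite integralB_EFin //; last 2 first.
  exact: integrableS (Xint hT).
  exact: finite_measure_integrable_cst.
rewrite (@integral_cst _ _ _ P _ (mC j) (lev j)%:E).
apply: fine_ge0; rewrite sube_ge0; last first.
  rewrite fin_numM // fin_num_measure //.
have := doob sND s0 (lev j) sNT'; rewrite sNT; apply.
Qed.

Let EG K : 0 <= EE P (G K).
Proof.
elim: K => [|K IH]; first by rewrite /G big_ord0; exact: EE_ge0.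
rewrite /G big_ord_recr /= EED //; first exact: addr_ge0.
exact: LG.
Qed.

Let pw w : (Z ^+ 2) w <= (Y ^+ 2 \- (2 \o* G J)) w.
Proof.
have -> : (Z ^+ 2) w = (a w - Y w) ^+ 2 by rewrite !expr2.
have -> : (Y ^+ 2 \- (2 \o* G J)) w = Y w ^+ 2 - G J w * 2 by rewrite !expr2.
have -> : a w = \sum_(j < J) \1_(Cj j) w * h by rewrite /a fct_sumE.
have -> : G J w = \sum_(j < J) (\1_(Cj j) w * (X T w - lev j)) * h.
  by rewrite /G fct_sumE.
have -> : Y w = X T w - c by [].
set e := fun j : nat => \1_(Cj j) w : R.
have e01 j : 0 <= e j <= 1 by rewrite /e indicE; case: (w \in Cj j); rewrite ?lexx ?ler01.
have h0' : 0 <= h by exact: ltW.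
have := sq_sum_le J h0' e01.
set A := \sum_(j < J) e j * h.
set Q := \sum_(j < J) (2 * j%:R + 1) * h ^+ 2 * e j.
set B := \sum_(j < J) j.+1%:R * h ^+ 2 * e j.
have QB : Q <= 2 * B.
  rewrite /Q /B mulr_sumr; apply: ler_sum => j _.
  have /andP[e0 _] := e01 j.
  have t : 0 <= h ^+ 2 * e j by rewrite mulr_ge0 ?sqr_ge0.
  rewrite -natr1; nra.
have GE : \sum_(j < J) (e j * (X T w - lev j)) * h = (X T w - c) * A - B.
  rewrite /A /B mulr_sumr -sumrB; apply: eq_bigr => j _; rewrite /lev -natr1; ring.
rewrite GE => AQ.
nra.
Qed.

Let EZ2 : EE P (Z ^+ 2) <= EE P (Y ^+ 2).
Proof.
have L1 : (Y ^+ 2 \- (2 \o* G J)) \in Lfun P 1.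
  by apply: rpredB; [exact: L2_sq | apply: Lfun_scale => //; exact: LG].
apply: le_trans (EEle (L2_sq LZ) L1 pw) _.
rewrite EEB ?L2_sq //; last by apply: Lfun_scale => //; exact: LG.
rewrite EEZ; last exact: LG.
by rewrite lerBlDr lerDl mulr_ge0.
Qed.

Let EZ : EE P Z = EE P a.
Proof.
rewrite /Z EEB ?L2_L1 // /Y EEB ?L2_L1 //; last exact: Lfun_cst.
by rewrite EXT EEcst subrr subr0.
Qed.

Let EY2 : EE P (Y ^+ 2) = EE P (X T ^+ 2) - c ^+ 2.
Proof.
have EY0 : EE P (X T \- cst c) = 0.
  by rewrite EEB ?L2_L1 ?EXT ?EEcst ?subrr //; exact: Lfun_cst.
have := varianceB_cst_r c XT2.
rewrite !varianceE // !EEE ?L2_sq ?L2_L1 // -!EFin_expe -!EFinB => /(congr1 fine) /=.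
by rewrite EY0 EXT expr0n subr0 /Y.
Qed.

Lemma core_bound :
  EE P (\sum_(j < J) (h \o* \1_(Cset s N (c + j.+1%:R * h)))) ^+ 2
    <= EE P (X T ^+ 2) - c ^+ 2 /\ 0 <= EE P (\sum_(j < J) (h \o* \1_(Cset s N (c + j.+1%:R * h)))).
Proof.
split.
  rewrite -EY2; change (EE P a ^+ 2 <= EE P (Y ^+ 2)); rewrite -EZ.
  exact: le_trans (EE_sq LZ) EZ2.
apply: EE_ge0 => w; rewrite fct_sumE; apply: sumr_ge0 => j _ /=.
apply: mulr_ge0; last exact: ltW.
by rewrite indicE; case: (_ \in _) => /=; rewrite ?ler01 ?lexx.
Qed.

End core.

Definition grid n (k : nat) : R := k%:R * (T / (2 ^ n)%:R).

Lemma pos2n n : 0 < (2 ^ n)%:R :> R.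
Proof. by rewrite ltr0n expn_gt0. Qed.

Lemma gridND n k : grid n k <= grid n k.+1.
Proof.
apply: ler_wpM2r; last by rewrite ler_nat.
by rewrite divr_ge0 ?ltW ?pos2n.
Qed.

Lemma grid0 n : grid n 0 = 0.
Proof. by rewrite /grid mul0r. Qed.

Lemma gridN n : grid n (2 ^ n) = T.
Proof. by rewrite /grid mulrC divfK // gt_eqF ?pos2n. Qed.

Lemma grid_in n k : (k <= 2 ^ n)%N -> 0 <= grid n k <= T.
Proof.
move=> kn; apply/andP; split.
  by apply: mulr_ge0; [exact: ler0n | apply: divr_ge0; [exact: ltW | exact: ltW (pos2n n)]].
by rewrite -[X in _ <= X](gridN n); apply: ge_sN => //; exact: gridND.
Qed.

Lemma grid_dbl n k : grid n.+1 k.*2 = grid n k.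
Proof.
rewrite /grid -muln2 expnS !natrM.
have := pos2n n; rewrite lt0r => /andP[n0 _].
by field; rewrite n0.
Qed.

Definition Mn n w := mx (fun k => X (grid n k) w) (2 ^ n).
Definition gn n w := Num.min (Mn n w - c) n%:R.

Lemma Mn_ge_c n w : c <= Mn n w.
Proof.
by have := @mx_ge _ (fun k => X (grid n k) w) (2 ^ n) 0 (leq0n _); rewrite /= grid0 HX0.
Qed.

Lemma gn_ge0 n w : 0 <= gn n w.
Proof. by rewrite /gn le_min subr_ge0 Mn_ge_c ler0n. Qed.

Lemma gn_le n w : gn n w <= n%:R.
Proof. by rewrite /gn ge_min lexx orbT. Qed.

Lemma Mn_nd n w : Mn n w <= Mn n.+1 w.
Proof.
rewrite /Mn; have [k kn ->] := mx_ex (fun k => X (grid n k) w) (2 ^ n).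
rewrite -grid_dbl; apply: (@mx_ge _ (fun k => X (grid n.+1 k) w)).
by rewrite -muln2 expnS mulnC leq_mul2l kn orbT.
Qed.

Lemma gn_nd w : {homo gn^~ w : n m / (n <= m)%N >-> n <= m}.
Proof.
apply/(nondecreasing_seqP (gn^~ w)) => n /=.
by rewrite /gn le_min !ge_min lerB ?Mn_nd //= ler_nat leqnSn !orbT.
Qed.

Lemma Mn_meas n : measurable_fun setT (Mn n).
Proof.
apply: (mx_meas (f := fun k w => X (grid n k) w)) => k kn.
exact/Xmeas/grid_in.
Qed.

Lemma gn_meas n : measurable_fun setT (gn n).
Proof.
apply: (measurable_minr (f := fun w => Mn n w - c) (g := cst n%:R)) => //.
apply: measurable_funB => //; exact: Mn_meas.
Qed.

Lemma gn_ub n w tw : (forall t, 0 <= t <= T -> X t w <= X tw w) -> gn n w <= X tw w - c.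
Proof.
move=> tmax; rewrite /gn ge_min lerB //.
rewrite /Mn; have [k kn ->] := mx_ex (fun k => X (grid n k) w) (2 ^ n).
by rewrite tmax // grid_in.
Qed.

Lemma cont_delta w tw e : continuous_paths T X -> 0 <= tw <= T -> 0 < e ->
  exists2 del, 0 < del & forall t, 0 <= t <= T -> `|tw - t| < del -> `|X tw w - X t w| < e.
Proof.
move=> cp twT e0.
have /subspace_continuousP /(_ tw) := cp w.
rewrite /= in_itv /= twT => /(_ isT) /cvgr_dist_lt /(_ e e0).
rewrite near_withinE => /nbhs_ballP -[del del0 H].
exists del => // t tT tdel.
apply: H => /=; last by rewrite in_itv /= tT.
by rewrite /ball /=.
Qed.
Lemma gn_approx w tw e : continuous_paths T X -> 0 <= tw <= T -> 0 < e ->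
  exists n, X tw w - c - e <= gn n w.
Proof.
move=> cp twT e0.
have [del del0 H] := cont_delta w cp twT e0.
set n1 := Num.trunc (T / del).
set n2 := Num.trunc (X tw w - c).
set n := maxn n1.+1 n2.+1.
exists n.
have q0 : 0 < T / (2 ^ n)%:R by rewrite divr_gt0 ?pos2n.
have hn : T / (2 ^ n)%:R < del.
  have : T / del < (2 ^ n)%:R.
    apply: lt_le_trans (truncnS_gt (T / del)) _; rewrite ler_nat.
    exact: leq_trans (leq_maxl _ _) (ltnW (ltn_expl n (isT : (1 < 2)%N))).
  by rewrite ltr_pdivrMr // ltr_pdivrMr ?pos2n // mulrC.
set q := T / (2 ^ n)%:R in q0 hn.
have /andP[t0 _] := twT.
have := trunc_itv (divr_ge0 t0 (ltW q0)).
set k := Num.trunc (tw / q) => /andP[k1 k2].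
rewrite ler_pdivlMr // in k1; rewrite ltr_pdivrMr // in k2.
have kn : (k <= 2 ^ n)%N.
  rewrite -(ler_nat R); apply: (@le_trans _ _ (tw / q)); first by rewrite ler_pdivlMr.
  rewrite ler_pdivrMr // /q mulrCA divff ?mulr1; first by case/andP: twT.
  by rewrite gt_eqF ?pos2n.
have gk : grid n k = k%:R * q by [].
have dk : `|tw - grid n k| < del.
  rewrite gk ger0_norm ?subr_ge0 //.
  by rewrite -natr1 mulrDl mul1r in k2; lra.
have := H _ (grid_in kn) dk.
rewrite ltr_norml => /andP[_ Xk].
have Mk : X (grid n k) w <= Mn n w by exact: (@mx_ge _ (fun k => X (grid n k) w)).
have nn2 : X tw w - c < n%:R.
  apply: lt_le_trans (truncnS_gt (X tw w - c)) _; rewrite ler_nat.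
  exact: leq_maxr.
rewrite /gn le_min; apply/andP; split; lra.
Qed.

Lemma EE_gn (XT2 : X T \in Lfun P 2%:E) n :
  EE P (gn n) <= Num.sqrt (EE P (X T ^+ 2) - c ^+ 2).
Proof.
have p12 : (1 <= (2:R)%:E)%E by rewrite lee_fin ler1n.
have p11 : (1 <= (1:R)%:E)%E by rewrite lexx.
apply/ler_addgt0Pr => e e0.
set J := (Num.trunc (n%:R / e)).+1.
have nJ : n%:R < J%:R * e by rewrite -ltr_pdivrMr // truncnS_gt.
have g0 : 0 <= grid n 0 by rewrite grid0.
have [core1 core2] := core_bound (s := grid n) (gridND n) g0
  (gridN n) J e0 XT2.
set a := \sum_(j < J) _ in core1 core2.
have Ea : EE P a <= Num.sqrt (EE P (X T ^+ 2) - c ^+ 2).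
  by rewrite -(ger0_norm core2) -sqrtr_sqr ler_wsqrtr.
have La1 : a \in Lfun P 1.
  apply: L2_L1; apply: rpred_sum => j _; apply: Lfun_scale => //.
  apply: Lfun_indic; apply: (Fmeas (t := grid n (2 ^ n))); first exact: grid_in.
  exact: Cset_F (gridND n) g0 _ _ (proj2 (andP (grid_in (leqnn _)))).
have Lg1 : gn n \in Lfun P 1.
  apply: L2_L1; apply: (@Lfun2_bounded _ _ _ _ _ n%:R); first exact: gn_meas.
  by move=> w; rewrite ger0_norm ?gn_ge0 ?gn_le.
have pw w : gn n w <= (a \+ cst e) w.
  rewrite /= /a fct_sumE.
  have i0 j : 0 <= \1_(Cset (grid n) (2 ^ n) (c + j.+1%:R * e)) w :> R.
    by rewrite indicE; case: (_ \in _); rewrite ?lexx ?ler01.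
  have i1 j : j.+1%:R * e <= Mn n w - c ->
      1 <= \1_(Cset (grid n) (2 ^ n) (c + j.+1%:R * e)) w :> R.
    move=> hj; rewrite indicE mem_set ?lexx //.
    have [k kn Mk] := mx_ex (fun k => X (grid n k) w) (2 ^ n).
    exists k => //; rewrite /Mn in hj; rewrite Mk in hj; lra.
  have H := @sum_lower _ (fun j => \1_(Cset (grid n) (2 ^ n) (c + j.+1%:R * e)) w : R)
    (Mn n w - c) e J e0 i0 i1.
  apply: (@le_trans _ _ (Num.min (Mn n w - c - e) (J%:R * e) + e)); last first.
    by rewrite lerD2r.
  rewrite /gn; case: (leP (Mn n w - c) n%:R) => h1;
    case: (leP (Mn n w - c - e) (J%:R * e)) => h2; lra.
apply: le_trans (EEle Lg1 (rpredD La1 (Lfun_cst _ _ _)) pw) _.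
all: try by rewrite lexx.
change (EE P (a \+ cst e) <= Num.sqrt (EE P (X T ^+ 2) - c ^+ 2) + e).
by rewrite EED ?EEcst ?lerD2r //; exact: Lfun_cst.
Qed.

Lemma gn_L1 n : gn n \in Lfun P 1.
Proof.
have p12 : (1 <= (2:R)%:E)%E by rewrite lee_fin ler1n.
apply: L2_L1; apply: (@Lfun2_bounded _ _ _ _ _ n%:R); first exact: gn_meas.
by move=> w; rewrite ger0_norm ?gn_ge0 ?gn_le.
Qed.

Lemma rmax_eq (cp : continuous_paths T X) w : exists2 tw, 0 <= tw <= T &
  running_max T X w = (X tw w)%:E /\ forall t, 0 <= t <= T -> X t w <= X tw w.
Proof.
have [tw twT tmax] := EVT_max (ltW T0) (cp w).
rewrite in_itv /= in twT.
have tmax' t : 0 <= t <= T -> X t w <= X tw w.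
  by move=> tT; apply: tmax; rewrite in_itv.
exists tw => //; split => //.
apply/eqP; rewrite eq_le; apply/andP; split.
  by apply: ge_ereal_sup => _ [t tT <-]; rewrite lee_fin tmax'.
by apply: ereal_sup_ubound; exists tw => //.
Qed.

Lemma G_eq (cp : continuous_paths T X) w tw : 0 <= tw <= T ->
  (forall t, 0 <= t <= T -> X t w <= X tw w) ->
  limn (fun n => (gn n w)%:E) = (X tw w - c)%:E.
Proof.
move=> twT tmax.
have nd : {homo (fun n => (gn n w)%:E) : n m / (n <= m)%N >-> (n <= m)%E}.
  by move=> n m nm; rewrite lee_fin gn_nd.
rewrite (cvg_lim _ (ereal_nondecreasing_cvgn nd)) //.
apply/eqP; rewrite eq_le; apply/andP; split.
  by apply: ge_ereal_sup => _ [n _ <-]; rewrite lee_fin gn_ub.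
apply/lee_addgt0Pr => e e0.
have [n hn] := gn_approx w cp twT e0.
apply: (@le_trans _ _ ((gn n w)%:E + e%:E)).
  by rewrite -EFinD lee_fin -lerBlDr.
by rewrite leeD2r //; apply: ereal_sup_ubound; exists n.
Qed.

Lemma main_sec (cp : continuous_paths T X) :
  (\int[P]_w running_max T X w <=
     (Num.sqrt 2)%:E * poweR (\int[P]_w ((X T w) ^+ 2)%:E) 2^-1)%E.
Proof.
have hT : 0 <= T <= T by rewrite lexx ltW.
have p12 : (1 <= (2:R)%:E)%E by rewrite lee_fin ler1n.
have [fin|inf] := boolP (\int[P]_w ((X T w) ^+ 2)%:E < +oo)%E; last first.
  move: inf; rewrite ltey negbK => /eqP ->.
  by rewrite poweRyr ?invr_neq0 // muleC gt0_mulye ?leey // lte_fin sqrtr_gt0.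
have XT2 : X T \in Lfun P 2%:E.
  apply: Lfun2_of; first exact: Xmeas.
  apply/integrableP; split.
    by apply/measurable_EFinP; apply: measurable_funX; exact: Xmeas.
  rewrite (le_lt_trans _ fin) //; rewrite le_eqVlt; apply/orP; left; apply/eqP.
  by apply: eq_integral => w _; rewrite gee0_abs // lee_fin sqr_ge0.
set Q := EE P (X T ^+ 2).
have IQ : (\int[P]_w ((X T w) ^+ 2)%:E)%E = Q%:E.
  rewrite /Q -EEE ?L2_sq // unlock; apply: eq_integral => w _.
  by rewrite !expr2.
have V0 : 0 <= Q - c ^+ 2 by rewrite subr_ge0 -{1}EXT EE_sq.
set V := Q - c ^+ 2 in V0.
set G := fun w => limn (fun n => (gn n w)%:E).
have nd w : {homo (fun n => (gn n w)%:E) : n m / (n <= m)%N >-> (n <= m)%E}.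
  by move=> n m nm; rewrite lee_fin gn_nd.
have Geq w : exists2 tw, 0 <= tw <= T & [/\ running_max T X w = (X tw w)%:E,
    G w = (X tw w - c)%:E & X 0 w <= X tw w].
  have [tw twT [rm tmax]] := rmax_eq cp w.
  exists tw => //; split => //; first by rewrite /G (G_eq cp twT tmax).
  by apply: tmax; rewrite lexx ltW.
have G0 w : (0 <= G w)%E.
  by have [tw _ [_ -> h]] := Geq w; rewrite lee_fin subr_ge0 -(HX0 w).
have IE n : (\int[P]_w (gn n w)%:E)%E = (EE P (gn n))%:E.
  by rewrite -EEE ?gn_L1 // unlock.
have mg n : measurable_fun setT (fun w => (gn n w)%:E).
  by apply/measurable_EFinP; exact: gn_meas.
have mG : measurable_fun setT G.
  apply: (@emeasurable_fun_cvg _ _ _ _ (fun n w => (gn n w)%:E)) => // w _.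
  exact: ereal_nondecreasing_is_cvgn.
have IG : (\int[P]_w G w <= (Num.sqrt V)%:E)%E.
  rewrite /G monotone_convergence //; [|by move=> n w _; rewrite lee_fin gn_ge0].
  apply: lime_le.
    apply: ereal_nondecreasing_is_cvgn => n m nm.
    by rewrite !IE lee_fin; apply: EEle; rewrite ?gn_L1 // => w; exact: gn_nd.
  by apply: nearW => n; rewrite IE lee_fin EE_gn.
have IntG : P.-integrable setT G.
  apply/integrableP; split => //.
  rewrite (le_lt_trans _ (@ltry _ (Num.sqrt V))) //.
  rewrite (le_trans _ IG) // le_eqVlt; apply/orP; left; apply/eqP.
  by apply: eq_integral => w _; rewrite gee0_abs.
have RM w : running_max T X w = (c%:E + G w)%E.
  by have [tw _ [-> -> _]] := Geq w; rewrite -EFinD subrKC.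
rewrite (eq_integral (fun w => c%:E + G w)%E); last by move=> w _; rewrite RM.
rewrite integralD //; last exact: (finite_measure_integrable_cst P c measurableT).
have Ic : (\int[P]_w (c%:E))%E = c%:E by rewrite -[RHS](expectation_cst P c) unlock.
rewrite Ic IQ poweR_EFin powR12_sqrt; last by rewrite (le_trans (sqr_ge0 c)) // -subr_ge0.
rewrite -EFinM.
apply: le_trans (leeD (lexx c%:E) IG) _.
rewrite -EFinD lee_fin -sqrtrM //.
have [cs|cs] := leP (c + Num.sqrt V) 0; first exact: le_trans cs (sqrtr_ge0 _).
rewrite -(ger0_norm (ltW cs)) -sqrtr_sqr ler_wsqrtr //.
have sV := sqr_sqrtr V0; move: (Num.sqrt V) sV => s sV.
rewrite /V in sV; have := sqr_ge0 (c - s); nra.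
Qed.

Theorem mainTheorem6_sec :
  continuous_paths T X ->
  (\int[P]_w running_max T X w <=
     (Num.sqrt 2)%:E * poweR (\int[P]_w ((X T w) ^+ 2)%:E) 2^-1)%E.
Proof. exact: main_sec. Qed.


End Proof6.

Theorem mainTheorem6 (d : measure_display) (Omega : measurableType d)
  (R : realType) (P : probability Omega R) (T : R) (F : R -> set (set Omega))
  (X : R -> Omega -> R) :
  0 < T ->
  is_filtration T F ->
  is_martingale T P F X ->
  continuous_paths T X ->
  (exists c : R, forall w, X 0 w = c) ->
  (\int[P]_w running_max T X w <=
     (Num.sqrt 2)%:E * poweR (\int[P]_w ((X T w) ^+ 2)%:E) 2^-1)%E.
Proof.
move=> T0 HF HM cp [c HX0].
exact: (@main_sec d Omega R P T F X c T0 HF HM HX0 cp).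
Qed.
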